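(* Let $v$ be a typical weight and let $X$ be a reflexive initial space such that for every $f\in X$ and $0\le r<1$ the function $f_r(z)=f(rz)$ is in $X$ and $\sup_{0\le r<1}\|f_r\|_X\le C\|f\|_X$ for a constant $C$ independent of $f$. Let $T$ be an intrinsic operator on $\mathcal{H}(\mathbb{D})$. (a) If $Tf_r\in H_{v,0}$ for all $f\in X$, $0\le r<1$, then $T:X\to H_v$ is bounded if and only if $T:X\to H_{v,0}$ is bounded. (b) If $Tf_r\in\mathcal{B}_{v,0}$ for all $f\in X$, $0\le r<1$, then $T:X\to\mathcal{B}_v$ is bounded if and only if $T:X\to\mathcal{B}_{v,0}$ is bounded.
   Context: $\mathcal{H}(\mathbb{D})$ is the space of holomorphic functions on the unit disk $\mathbb{D}$ with the topology $\tau_{uc}$ of uniform convergence on compact subsets. A linear operator $T$ on $\mathcal{H}(\mathbb{D})$ is intrinsic if it maps $\tau_{uc}$-convergent sequences to $\tau_{uc}$-convergent sequences. An initial space is a Banach space $X\subset\mathcal{H}(\mathbb{D})$ containing the polynomials such that every sequence in the closed unit ball of $X$ has a subsequence converging in $\tau_{uc}$ to some function in $X$. A typical weight is a continuous radial $v:\mathbb{D}\to(0,1]$, non-increasing in $|z|$, with $v(z)\to0$ as $|z|\to1$. $H_v=\{f:\sup_zv(z)|f(z)|<\infty\}$ (norm that supremum), $\mathcal{B}_v=\{f:\sup_zv(z)|f'(z)|<\infty\}$ (norm $|f(0)|+\sup_zv(z)|f'(z)|$), and $H_{v,0}$, $\mathcal{B}_{v,0}$ the subspaces where $v(z)|f(z)|\to0$,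 resp. $v(z)|f'(z)|\to0$, as $|z|\to1$. *)

(* Defs.v *)
From Stdlib Require Import Reals.
From Coquelicot Require Import Coquelicot.
Open Scope R_scope.

Definition inD (z : C) : Prop := Cmod z < 1.

Definition holo (f : C -> C) : Prop :=
  forall z, inD z -> ex_derive (K := C_AbsRing) (V := C_NormedModule) f z.

Definition fadd (f g : C -> C) : C -> C := fun z => Cplus (f z) (g z).
Definition fscale (a : C) (f : C -> C) : C -> C := fun z => Cmult a (f z).
Definition fzero : C -> C := fun _ => RtoC 0.
Definition fsub (f g : C -> C) : C -> C := fadd f (fscale (RtoC (-1)) g).

(* elements of H(D) are identified when they agree on D *)
Definition eqD (f g : C -> C) : Prop := forall z, inD z -> f z = g z.

Definition dil (r : R) (f : C -> C) : C -> C := fun z => f (Cmult (RtoC r) z).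

Definition poly_fun (c : nat -> C) (n : nat) : C -> C :=
  fun z => sum_n (G := C_AbelianMonoid) (fun k => Cmult (c k) (pow_n (K := C_Ring) z k)) n.

(* uniform convergence on compact subsets of D (tau_uc); every compact subset of
   D lies in a closed disk {|z| <= r}, r < 1, and conversely these are compact *)
Definition ucc_conv (fn : nat -> C -> C) (f : C -> C) : Prop :=
  forall r, 0 <= r < 1 -> forall eps, 0 < eps ->
    exists N, forall n, (N <= n)%nat -> forall z, Cmod z <= r ->
      Cmod (Cminus (fn n z) (f z)) < eps.

Definition lin_op_HD (T : (C -> C) -> (C -> C)) : Prop :=
  (forall f, holo f -> holo (T f)) /\
  (forall f g, holo f -> holo g -> eqD f g -> eqD (T f) (T g)) /\
  (forall a b f g, holo f -> holo g ->
     eqD (T (fadd (fscale a f) (fscale b g))) (fadd (fscale a (T f)) (fscale b (T g)))).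

Definition intrinsic (T : (C -> C) -> (C -> C)) : Prop :=
  lin_op_HD T /\
  forall (fn : nat -> C -> C) (f : C -> C),
    (forall n, holo (fn n)) -> holo f -> ucc_conv fn f ->
    exists g, holo g /\ ucc_conv (fun n => T (fn n)) g.

Definition typical_weight (v : C -> R) : Prop :=
  (forall z, inD z -> continuous (v : C_UniformSpace -> R_UniformSpace) z) /\
  (forall z, inD z -> 0 < v z <= 1) /\
  (forall z w, inD z -> inD w -> Cmod z = Cmod w -> v z = v w) /\
  (forall z w, inD z -> inD w -> Cmod z <= Cmod w -> v w <= v z) /\
  (forall eps, 0 < eps -> exists delta, 0 < delta /\
     forall z, inD z -> 1 - delta < Cmod z -> v z < eps).

(* Banach space X ⊂ H(D) given by a carrier predicate and a norm *)
Definition banach_sub (X : (C -> C) -> Prop) (nX : (C -> C) -> R) : Prop :=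
  (forall f, X f -> holo f) /\
  (forall f g, X f -> holo g -> eqD f g -> X g /\ nX g = nX f) /\
  X fzero /\
  (forall a b f g, X f -> X g -> X (fadd (fscale a f) (fscale b g))) /\
  (forall f, X f -> 0 <= nX f) /\
  (forall f, X f -> (nX f = 0 <-> eqD f fzero)) /\
  (forall a f, X f -> nX (fscale a f) = Cmod a * nX f) /\
  (forall f g, X f -> X g -> nX (fadd f g) <= nX f + nX g) /\
  (forall un : nat -> C -> C, (forall n, X (un n)) ->
     (forall eps, 0 < eps -> exists N, forall m n, (N <= m)%nat -> (N <= n)%nat ->
        nX (fsub (un m) (un n)) < eps) ->
     exists f, X f /\ forall eps, 0 < eps -> exists N, forall n, (N <= n)%nat ->
        nX (fsub (un n) f) < eps).

Definition initial_space (X : (C -> C) -> Prop) (nX : (C -> C) -> R) : Prop :=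
  banach_sub X nX /\
  (forall c n, X (poly_fun c n)) /\
  (forall fn : nat -> C -> C, (forall n, X (fn n) /\ nX (fn n) <= 1) ->
     exists (phi : nat -> nat) (f : C -> C),
       (forall n, (phi n < phi (S n))%nat) /\ X f /\ ucc_conv (fun n => fn (phi n)) f).

Definition dual_bound (X : (C -> C) -> Prop) (nX : (C -> C) -> R)
    (phi : (C -> C) -> C) (K : R) : Prop :=
  forall f, X f -> Cmod (phi f) <= K * nX f.
Definition in_dual (X : (C -> C) -> Prop) (nX : (C -> C) -> R) (phi : (C -> C) -> C) : Prop :=
  (forall a b f g, X f -> X g ->
     phi (fadd (fscale a f) (fscale b g)) = Cplus (Cmult a (phi f)) (Cmult b (phi g))) /\
  exists K, dual_bound X nX phi K.

(* bidual X** : bounded linear functionals on X* (the dual norm of phi is the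
   infimum of its bounds K, so |Phi phi| <= M ||phi|| iff |Phi phi| <= M K for all bounds K) *)
Definition in_bidual (X : (C -> C) -> Prop) (nX : (C -> C) -> R)
    (Phi : ((C -> C) -> C) -> C) : Prop :=
  (forall a b phi psi, in_dual X nX phi -> in_dual X nX psi ->
     Phi (fun f => Cplus (Cmult a (phi f)) (Cmult b (psi f)))
       = Cplus (Cmult a (Phi phi)) (Cmult b (Phi psi))) /\
  exists M, forall phi K, in_dual X nX phi -> dual_bound X nX phi K ->
     Cmod (Phi phi) <= M * K.

Definition reflexive (X : (C -> C) -> Prop) (nX : (C -> C) -> R) : Prop :=
  forall Phi, in_bidual X nX Phi ->
    exists f, X f /\ forall phi, in_dual X nX phi -> Phi phi = phi f.

Definition Hv (v : C -> R) (f : C -> C) : Prop :=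
  holo f /\ exists K, forall z, inD z -> v z * Cmod (f z) <= K.
Definition Hv0 (v : C -> R) (f : C -> C) : Prop :=
  holo f /\ forall eps, 0 < eps -> exists delta, 0 < delta /\
    forall z, inD z -> 1 - delta < Cmod z -> v z * Cmod (f z) < eps.
Definition Bv (v : C -> R) (f : C -> C) : Prop :=
  holo f /\ exists K, forall z, inD z -> v z * Cmod (C_derive f z) <= K.
Definition Bv0 (v : C -> R) (f : C -> C) : Prop :=
  holo f /\ forall eps, 0 < eps -> exists delta, 0 < delta /\
    forall z, inD z -> 1 - delta < Cmod z -> v z * Cmod (C_derive f z) < eps.

Definition bounded_into_Hnorm (X : (C -> C) -> Prop) (nX : (C -> C) -> R)
    (v : C -> R) (T : (C -> C) -> (C -> C)) : Prop :=
  exists M, forall f, X f -> forall z, inD z -> v z * Cmod (T f z) <= M * nX f.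
Definition bounded_into_Bnorm (X : (C -> C) -> Prop) (nX : (C -> C) -> R)
    (v : C -> R) (T : (C -> C) -> (C -> C)) : Prop :=
  exists M, forall f, X f -> forall z, inD z ->
    Cmod (T f (RtoC 0)) + v z * Cmod (C_derive (T f) z) <= M * nX f.

(* Main.v *)
Require Import Defs.
From Stdlib Require Import Reals Lra Lia ClassicalEpsilon Classical FunctionalExtensionality.
From Coquelicot Require Import Coquelicot.
From mathcomp Require ssreflect ssrbool ssrnat classical_sets filter boolp.
Open Scope R_scope.


Definition UFp (U : (nat -> Prop) -> Prop) : Prop :=
  (~ U (fun _ => False)) /\
  (forall A B, U A -> U B -> U (fun n => A n /\ B n)) /\
  (forall A B : nat -> Prop, (forall n, A n -> B n) -> U A -> U B) /\
  (forall A, U A \/ U (fun n => ~ A n)) /\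
  (forall N, U (fun n => (N <= n)%nat)).

Module UF.
Import ssreflect ssrbool ssrnat classical_sets filter boolp.
Lemma free_ultra : exists U : (nat -> Prop) -> Prop, UFp U.
Proof.
have [G [GU sFG]] := ultraFilterLemma eventually_filter.
exists G; unfold UFp; split; [|split; [|split; [|split]]].
- move=> H. have : G set0 by exact H. by apply/filter_not_empty.
- move=> A B HA HB. exact: (filterI HA HB).
- move=> A B AB HA. apply: (filterS _ HA) => n. exact: AB.
- move=> A. exact: (in_ultra_setVsetC A GU).
- move=> N. apply: sFG. exists N => // n /= /leP. done.
Qed.
End UF.

Lemma uf_ne U : UFp U -> forall A, U A -> exists n, A n.
Proof.
  intros [H0 [HI [HS _]]] A HA. apply NNPP; intro Hn.
  apply H0. apply (HS A); auto. intros n Hn'. apply Hn. eauto.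
Qed.

Lemma uf_mono U : UFp U -> forall A B : nat -> Prop, (forall n, A n -> B n) -> U A -> U B.
Proof. intros [_ [_ [HS _]]]; auto. Qed.

Lemma uf_and U : UFp U -> forall A B, U A -> U B -> U (fun n => A n /\ B n).
Proof. intros [_ [HI _]]; auto. Qed.

Lemma uf_true U : UFp U -> forall A : nat -> Prop, (forall n, A n) -> U A.
Proof. intros HU A HA. destruct HU as (_&_&HS&_&HN). apply (HS (fun n => (0<=n)%nat)); auto. Qed.

Definition ulim U (a : nat -> C) (l : C) : Prop :=
  forall eps, 0 < eps -> U (fun n => Cmod (Cminus (a n) l) < eps).

Lemma Cmod_sub_sym x y : Cmod (Cminus x y) = Cmod (Cminus y x).
Proof. replace (Cminus x y) with (Copp (Cminus y x)) by ring. apply Cmod_opp. Qed.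

Lemma Cmod_tri3 x y z : Cmod (Cminus x z) <= Cmod (Cminus x y) + Cmod (Cminus y z).
Proof. replace (Cminus x z) with (Cplus (Cminus x y) (Cminus y z)) by ring. apply Cmod_triangle. Qed.

Lemma ulim_unique U a l1 l2 : UFp U -> ulim U a l1 -> ulim U a l2 -> l1 = l2.
Proof.
  intros HU H1 H2. apply NNPP; intro Hne.
  assert (Hp : 0 < Cmod (Cminus l1 l2)).
  { apply Cmod_gt_0. intro E. apply Hne. replace l1 with (Cplus (Cminus l1 l2) l2) by ring. rewrite E. ring. }
  assert (He : 0 < Cmod (Cminus l1 l2) / 2) by lra.
  set (e := Cmod (Cminus l1 l2) / 2) in *.
  destruct (uf_ne U HU _ (uf_and U HU _ _ (H1 e He) (H2 e He))) as [n [A B]].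
  pose proof (Cmod_tri3 l1 (a n) l2). rewrite (Cmod_sub_sym l1 (a n)) in H. unfold e in *. lra.
Qed.

Lemma ulim_lin U a b la lb al be : UFp U -> ulim U a la -> ulim U b lb ->
  ulim U (fun n => Cplus (Cmult al (a n)) (Cmult be (b n))) (Cplus (Cmult al la) (Cmult be lb)).
Proof.
  intros HU Ha Hb eps He.
  set (k := Cmod al + Cmod be + 1).
  assert (Hk : 0 < k) by (unfold k; pose proof (Cmod_ge_0 al); pose proof (Cmod_ge_0 be); lra).
  apply (uf_mono U HU (fun n => Cmod (Cminus (a n) la) < eps / k /\ Cmod (Cminus (b n) lb) < eps / k)).
  2: apply uf_and; auto; [apply Ha | apply Hb]; apply Rdiv_lt_0_compat; auto.
  intros n [A B].
  replace (Cminus (Cplus (Cmult al (a n)) (Cmult be (b n))) (Cplus (Cmult al la) (Cmult be lb)))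
    with (Cplus (Cmult al (Cminus (a n) la)) (Cmult be (Cminus (b n) lb))) by ring.
  eapply Rle_lt_trans. apply Cmod_triangle. rewrite !Cmod_mult.
  assert (eps / k * k = eps) by (field; lra).
  pose proof (Cmod_ge_0 al); pose proof (Cmod_ge_0 be).
  pose proof (Cmod_ge_0 (Cminus (a n) la)); pose proof (Cmod_ge_0 (Cminus (b n) lb)).
  unfold k in *. nra.
Qed.

Lemma ulim_conv U a l : UFp U ->
  (forall eps, 0 < eps -> exists N, forall n, (N <= n)%nat -> Cmod (Cminus (a n) l) < eps) ->
  ulim U a l.
Proof.
  intros HU H eps He. destruct (H eps He) as [N HN].
  destruct HU as (A&B&HS&D&HN2). apply (HS _ _ HN (HN2 N)).
Qed.

Lemma ulim_le U a l B : UFp U -> ulim U a l -> (forall n, Cmod (a n) <= B) -> Cmod l <= B.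
Proof.
  intros HU H Hb. apply Rnot_lt_le; intro Hl.
  destruct (uf_ne U HU _ (H (Cmod l - B) ltac:(lra))) as [n Hn].
  pose proof (Cmod_tri3 l (a n) 0).
  replace (Cminus l 0) with l in H0 by ring. replace (Cminus (a n) 0) with (a n) in H0 by ring.
  rewrite (Cmod_sub_sym l (a n)) in H0. specialize (Hb n). lra.
Qed.

Lemma ulim_ge U a l B : UFp U -> ulim U a l -> (forall n, B <= Cmod (a n)) -> B <= Cmod l.
Proof.
  intros HU H Hb. apply Rnot_lt_le; intro Hl.
  destruct (uf_ne U HU _ (H (B - Cmod l) ltac:(lra))) as [n Hn].
  pose proof (Cmod_tri3 (a n) l 0).
  replace (Cminus l 0) with l in H0 by ring. replace (Cminus (a n) 0) with (a n) in H0 by ring.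
  specialize (Hb n). lra.
Qed.

Lemma rlim_ex U (x : nat -> R) B : UFp U -> (forall n, Rabs (x n) <= B) ->
  exists l, forall eps, 0 < eps -> U (fun n => Rabs (x n - l) < eps).
Proof.
  intros HU Hb.
  set (S := fun t => U (fun n => t <= x n)).
  assert (Hbd : bound S).
  { exists B. intros t Ht. apply Rnot_lt_le; intro Hlt. destruct (uf_ne U HU _ Ht) as [n Hn].
    specialize (Hb n). apply Rabs_le_between in Hb. lra. }
  assert (Hne : exists t, S t).
  { exists (-B). unfold S. apply (uf_true U HU). intro n. specialize (Hb n). apply Rabs_le_between in Hb. lra. }
  destruct (completeness S Hbd Hne) as [l [Hub Hlub]].
  exists l. intros eps He.
  assert (H1 : ~ S (l + eps/2)). { intro Hs. specialize (Hub _ Hs). lra. }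
  assert (H2 : exists t, S t /\ l - eps/2 < t).
  { apply NNPP; intro Hn. assert (is_upper_bound S (l - eps/2)).
    { intros t Ht. apply Rnot_lt_le; intro Hlt. apply Hn. eauto. }
    specialize (Hlub _ H). lra. }
  destruct H2 as [t [Ht Hlt]].
  destruct HU as (A0&AI&AS&AU&AN).
  destruct (AU (fun n => l + eps/2 <= x n)) as [Hc|Hc]; [contradiction|].
  apply (AS (fun n => t <= x n /\ ~ (l + eps/2 <= x n))); [|apply AI; auto].
  intros n [P Q]. apply Rabs_lt_between. lra.
Qed.

Lemma im_le_Cmod c : Rabs (snd c) <= Cmod c.
Proof. pose proof (Rmax_Cmod c). pose proof (Rmax_r (Rabs (fst c)) (Rabs (snd c))). lra. Qed.
Lemma re_le_Cmod' c : Rabs (fst c) <= Cmod c.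
Proof. pose proof (Rmax_Cmod c). pose proof (Rmax_l (Rabs (fst c)) (Rabs (snd c))). lra. Qed.

Lemma Cmod_le_sum c : Cmod c <= Rabs (fst c) + Rabs (snd c).
Proof.
  destruct c as [x y]. unfold Cmod; simpl.
  apply Rsqr_incr_0_var.
  - rewrite Rsqr_sqrt by nra. unfold Rsqr.
    pose proof (Rabs_pos x); pose proof (Rabs_pos y).
    assert (x*x = Rabs x * Rabs x) by (rewrite <- Rabs_mult; symmetry; apply Rabs_pos_eq; nra).
    assert (y*y = Rabs y * Rabs y) by (rewrite <- Rabs_mult; symmetry; apply Rabs_pos_eq; nra).
    nra.
  - pose proof (Rabs_pos x); pose proof (Rabs_pos y). lra.
Qed.

Lemma ulim_ex U a B : UFp U -> (forall n, Cmod (a n) <= B) -> exists l, ulim U a l.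
Proof.
  intros HU Hb.
  destruct (rlim_ex U (fun n => fst (a n)) B HU) as [lr Hr].
  { intro n. eapply Rle_trans; [apply re_le_Cmod'|apply Hb]. }
  destruct (rlim_ex U (fun n => snd (a n)) B HU) as [li Hi].
  { intro n. eapply Rle_trans; [apply im_le_Cmod|apply Hb]. }
  exists (lr, li). intros eps He.
  apply (uf_mono U HU (fun n => Rabs (fst (a n) - lr) < eps/2 /\ Rabs (snd (a n) - li) < eps/2)).
  2: apply uf_and; auto; [apply Hr|apply Hi]; lra.
  intros n [P Q]. eapply Rle_lt_trans. apply Cmod_le_sum.
  destruct (a n) as [x y]. unfold Cminus, Cplus, Copp in *. simpl in *. fold (x - lr) (y - li). lra.
Qed.

Definition ULim U (a : nat -> C) : C := epsilon (inhabits (RtoC 0)) (fun l => ulim U a l).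

Lemma ULim_eq U a l : UFp U -> ulim U a l -> ULim U a = l.
Proof.
  intros HU H. unfold ULim. apply (ulim_unique U a); auto.
  apply epsilon_spec. eauto.
Qed.

Lemma ULim_spec U a B : UFp U -> (forall n, Cmod (a n) <= B) -> ulim U a (ULim U a).
Proof.
  intros HU Hb. destruct (ulim_ex U a B HU Hb) as [l Hl]. rewrite (ULim_eq U a l); auto.
Qed.

Lemma sqrt2_lt2 : sqrt 2 < 2.
Proof. pose proof Rlt_sqrt2_0. pose proof (sqrt_sqrt 2 ltac:(lra)). nra. Qed.

Lemma ball_Cmod (z w : C) (e : posreal) : ball z e w -> Cmod (Cminus w z) < 2 * e.
Proof.
  intro H. pose proof (C_NormedModule_mixin_compat2 z w e H). pose proof sqrt2_lt2.
  pose proof (cond_pos e). change (Cminus w z) with (minus w z). apply Rlt_le_trans with (sqrt 2 * e); [exact H0 | nra].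
Qed.

Lemma Cmod_ball (z w : C) (e : R) : Cmod (Cminus w z) < e -> ball z e w.
Proof. intro H. apply C_NormedModule_mixin_compat1. exact H. Qed.

Lemma holo_cont f z : holo f -> inD z -> forall eps, 0 < eps -> exists del, 0 < del /\
  forall w, Cmod (Cminus w z) < del -> Cmod (Cminus (f w) (f z)) < eps.
Proof.
  intros Hf Hz eps He.
  pose proof (ex_derive_continuous (K := C_AbsRing) (V := C_NormedModule) f z (Hf z Hz)) as Hc.
  unfold continuous in Hc. apply filterlim_locally with (eps := mkposreal (eps/2) ltac:(lra)) in Hc.
  destruct Hc as [del Hdel].
  exists del. split. apply cond_pos. intros w Hw.
  specialize (Hdel w Hw).
  pose proof (ball_Cmod (f z) (f w) _ Hdel). simpl in H. lra.
Qed.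

Lemma inD_locally z : inD z -> locally (T := AbsRing_UniformSpace C_AbsRing) z inD.
Proof.
  intro Hz. unfold inD in *.
  assert (He : 0 < (1 - Cmod z) / 2) by lra.
  exists (mkposreal _ He). intros w Hw. change C in w.
  change (Cmod (Cminus w z) < (1 - Cmod z) / 2) in Hw.
  pose proof (Cmod_triangle z (Cminus w z)). replace (Cplus z (Cminus w z)) with w in H by ring. lra.
Qed.

Lemma Ccomm : forall n m : C_AbsRing, mult n m = mult m n.
Proof. intros n m. apply Cmult_comm. Qed.

Lemma is_derive_Cscal (F : C -> C) z d a :
  is_derive (K := C_AbsRing) (V := C_NormedModule) F z d ->
  is_derive (K := C_AbsRing) (V := C_NormedModule) (fun x => Cmult a (F x)) z (Cmult a d).
Proof.
  intro dF. pose proof (filterdiff_scal_r_fct (K:=C_AbsRing) (V:=C_NormedModule) a _ _ Ccomm dF) as dF1.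
  unfold is_derive. eapply filterdiff_ext_lin. exact dF1. intro y.
  change (Cmult a (Cmult y d) = Cmult y (Cmult a d)). ring.
Qed.

Lemma deriv_comb F G H z a b : holo F -> holo G -> inD z ->
  eqD H (fadd (fscale a F) (fscale b G)) ->
  C_derive H z = Cplus (Cmult a (C_derive F z)) (Cmult b (C_derive G z)).
Proof.
  intros HF HG Hz HH.
  pose proof (is_derive_Cscal F z _ a (C_derive_correct F z z (HF z Hz))) as dF.
  pose proof (is_derive_Cscal G z _ b (C_derive_correct G z z (HG z Hz))) as dG.
  pose proof (is_derive_plus _ _ _ _ _ dF dG) as dS.
  assert (dH : is_derive (K := C_AbsRing) (V := C_NormedModule) H z
     (Cplus (Cmult a (C_derive F z)) (Cmult b (C_derive G z)))).
  { apply (is_derive_ext_loc _ _ _ _ ) with (2 := dS).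
    generalize (inD_locally z Hz). apply filter_imp. intros t Ht.
    rewrite (HH t Ht). reflexivity. }
  apply (is_C_derive_unique _ _ _ dH).
Qed.

Lemma X_scale X nX : banach_sub X nX -> forall a f, X f -> X (fscale a f).
Proof.
  intros HB a f Hf. destruct HB as (_&_&_&HC&_).
  replace (fscale a f) with (fadd (fscale a f) (fscale (RtoC 0) f)).
  apply HC; auto. apply functional_extensionality; intro z. unfold fadd, fscale. ring.
Qed.

Lemma dual_eqD X nX psi : banach_sub X nX -> in_dual X nX psi ->
  forall g f, X g -> X f -> eqD g f -> psi g = psi f.
Proof.
  intros HB [HL [K HK]] g f Hg Hf Heq.
  pose proof HB as (HXh&HXe&HX0&HC&Hnn&Hn0&_).
  set (d := fadd (fscale (RtoC 1) g) (fscale (Copp (RtoC 1)) f)).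
  assert (Hd : X d) by (apply HC; auto).
  assert (Hd0 : eqD d fzero).
  { intros z Hz. unfold d, fadd, fscale, fzero. rewrite (Heq z Hz). ring. }
  assert (Hn : nX d = 0) by (apply Hn0; auto).
  specialize (HK d Hd). rewrite Hn, Rmult_0_r in HK.
  assert (E : psi d = RtoC 0) by (apply Cmod_eq_0; pose proof (Cmod_ge_0 (psi d)); lra).
  unfold d in E. rewrite HL in E by auto.
  transitivity (Cplus (Cplus (Cmult (RtoC 1) (psi g)) (Cmult (Copp (RtoC 1)) (psi f))) (psi f)).
  ring. rewrite E. ring.
Qed.

Lemma phi_ge (phi : nat -> nat) : (forall n, (phi n < phi (S n))%nat) -> forall n, (n <= phi n)%nat.
Proof. intros H n. induction n. lia. specialize (H n). lia. Qed.

Lemma pt_eval_bound X nX : initial_space X nX -> forall z, inD z ->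
  exists K, forall h, X h -> Cmod (h z) <= K * nX h.
Proof.
  intros [HB [_ Hcomp]] z Hz.
  pose proof HB as (HXh&HXe&HX0&HC&Hnn&Hn0&HnS&_).
  apply NNPP; intro Hn.
  assert (Hs : forall n : nat, exists h, X h /\ INR n * nX h < Cmod (h z)).
  { intro n. apply NNPP; intro Hn'. apply Hn. exists (INR n). intros h Hh.
    apply Rnot_lt_le. intro Hlt. apply Hn'. eauto. }
  set (hs := fun n => proj1_sig (constructive_indefinite_description _ (Hs n))).
  assert (Hhs : forall n, X (hs n) /\ INR n * nX (hs n) < Cmod (hs n z)).
  { intro n. unfold hs. destruct (constructive_indefinite_description _ (Hs n)). simpl. auto. }
  assert (Hpos : forall n, 0 < nX (hs n)).
  { intro n. destruct (Hhs n) as [H1 H2]. pose proof (Hnn _ H1).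
    destruct (Req_dec (nX (hs n)) 0) as [E|E]; [|lra].
    pose proof E as E0. apply Hn0 in E; auto. rewrite (E z Hz) in H2. unfold fzero in H2. rewrite Cmod_0 in H2.
    rewrite E0 in H2. rewrite Rmult_0_r in H2. lra. }
  set (gs := fun n => fscale (RtoC (/ nX (hs n))) (hs n)).
  assert (Hgs : forall n, X (gs n) /\ nX (gs n) <= 1).
  { intro n. destruct (Hhs n) as [H1 H2]. split. apply (X_scale X nX HB); auto.
    unfold gs. rewrite HnS by auto. rewrite Cmod_R, Rabs_pos_eq.
    specialize (Hpos n). right. field. lra. left. apply Rinv_0_lt_compat. auto. }
  assert (Hgz : forall n, INR n < Cmod (gs n z)).
  { intro n. destruct (Hhs n) as [H1 H2]. unfold gs, fscale. rewrite Cmod_mult, Cmod_R, Rabs_pos_eq.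
    specialize (Hpos n). apply Rmult_lt_reg_l with (nX (hs n)); auto.
    rewrite <- Rmult_assoc, Rinv_r, Rmult_1_l by lra. lra.
    left. apply Rinv_0_lt_compat. auto. }
  destruct (Hcomp gs Hgs) as [phi [F [Hphi [HF Hconv]]]].
  destruct (Hconv (Cmod z) (conj (Cmod_ge_0 z) Hz) 1 Rlt_0_1) as [N HN].
  destruct (INR_unbounded (Cmod (F z) + 1)) as [m Hm].
  specialize (HN (max N m) (Nat.le_max_l _ _) z (Rle_refl _)).
  pose proof (Hgz (phi (max N m))).
  pose proof (phi_ge phi Hphi (max N m)).
  assert (INR m <= INR (phi (max N m))) by (apply le_INR; lia).
  pose proof (Cmod_tri3 (gs (phi (max N m)) z) (F z) 0).
  replace (Cminus (gs (phi (max N m)) z) 0) with (gs (phi (max N m)) z) in H2 by ring.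
  replace (Cminus (F z) 0) with (F z) in H2 by ring. lra.
Qed.

Definition rk (k : nat) : R := 1 - / (INR k + 2).

Lemma rk_bounds k : 0 <= rk k < 1.
Proof.
  unfold rk. pose proof (pos_INR k).
  assert (0 < / (INR k + 2)) by (apply Rinv_0_lt_compat; lra).
  assert (/ (INR k + 2) <= / 2) by (apply Rinv_le_contravar; lra). lra.
Qed.

Lemma dil_conv f z : holo f -> inD z ->
  forall eps, 0 < eps -> exists N, forall n, (N <= n)%nat ->
    Cmod (Cminus (dil (rk n) f z) (f z)) < eps.
Proof.
  intros Hf Hz eps He.
  destruct (holo_cont f z Hf Hz eps He) as [del [Hdel Hd]].
  destruct (archimed_cor1 del Hdel) as [N [HN HN0]].
  exists N. intros n Hn. apply Hd.
  unfold dil, rk.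
  replace (Cminus (Cmult (RtoC (1 - / (INR n + 2))) z) z) with (Cmult (RtoC (- / (INR n + 2))) z).
  2:{ rewrite RtoC_opp, RtoC_minus. ring. }
  rewrite Cmod_mult, Cmod_R. unfold inD in Hz.
  assert (0 < INR N) by (apply lt_0_INR; lia).
  assert (INR N <= INR n) by (apply le_INR; lia).
  assert (0 < / (INR n + 2)) by (apply Rinv_0_lt_compat; lra).
  assert (/ (INR n + 2) <= / INR N) by (apply Rinv_le_contravar; lra).
  rewrite Rabs_Ropp, Rabs_pos_eq by lra. pose proof (Cmod_ge_0 z). nra.
Qed.

Lemma core X nX (HI : initial_space X nX) (HR : reflexive X nX) Cst
  (HC : forall f, X f -> forall r, 0 <= r < 1 -> X (dil r f) /\ nX (dil r f) <= Cst * nX f)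
  (phis : nat -> (C -> C) -> C) M
  (HL : forall n a b g h, X g -> X h ->
     phis n (fadd (fscale a g) (fscale b h)) = Cplus (Cmult a (phis n g)) (Cmult b (phis n h)))
  (HBd : forall n h, X h -> Cmod (phis n h) <= M * nX h)
  f (Hf : X f)
  (HZ : forall r, 0 <= r < 1 -> forall eps, 0 < eps -> exists N, forall n, (N <= n)%nat ->
      Cmod (phis n (dil r f)) < eps)
  eps (He : 0 < eps) (Hge : forall n, eps <= Cmod (phis n f)) : False.
Proof.
  destruct UF.free_ultra as [U HU].
  pose proof HI as [HB _].
  pose proof HB as (HXh&HXe&HX0&HXC&Hnn&Hn0&HnS&_).
  set (psi := fun h => ULim U (fun n => phis n h)).
  assert (Hps : forall h, X h -> ulim U (fun n => phis n h) (psi h)).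
  { intros h Hh. apply (ULim_spec U _ (M * nX h) HU). intro n. auto. }
  assert (Hpsi : in_dual X nX psi).
  { split.
    - intros a b g h Hg Hh. unfold psi at 1.
      apply ULim_eq; auto.
      replace (fun n => phis n (fadd (fscale a g) (fscale b h)))
        with (fun n => Cplus (Cmult a (phis n g)) (Cmult b (phis n h))).
      apply ulim_lin; auto.
      apply functional_extensionality; intro n. rewrite HL; auto.
    - exists M. intros h Hh. apply (ulim_le U _ _ _ HU (Hps h Hh)). auto. }
  assert (Hpf : eps <= Cmod (psi f)) by (apply (ulim_ge U _ _ _ HU (Hps f Hf)); auto).
  set (Phi := fun phi : (C -> C) -> C => ULim U (fun k => phi (dil (rk k) f))).
  assert (HPs : forall phi, in_dual X nX phi -> ulim U (fun k => phi (dil (rk k) f)) (Phi phi)).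
  { intros phi [_ [K HK]]. apply (ULim_spec U _ (Rabs K * (Rabs Cst * nX f)) HU).
    intro k. destruct (HC f Hf (rk k) (rk_bounds k)) as [H1 H2].
    specialize (HK _ H1). pose proof (Hnn _ H1). pose proof (Hnn _ Hf).
    pose proof (Rle_abs K). pose proof (Rle_abs Cst). pose proof (Rabs_pos K). pose proof (Rabs_pos Cst).
    assert (K * nX (dil (rk k) f) <= Rabs K * nX (dil (rk k) f)) by nra.
    assert (nX (dil (rk k) f) <= Rabs Cst * nX f) by nra.
    nra. }
  assert (HPhi : in_bidual X nX Phi).
  { split.
    - intros a b phi ps Hphi Hps'. unfold Phi at 1. apply ULim_eq; auto.
      apply ulim_lin; auto.
    - exists (Cst * nX f). intros phi K Hphi HK.
      apply (ulim_le U _ _ _ HU (HPs phi Hphi)). intro k.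
      destruct (HC f Hf (rk k) (rk_bounds k)) as [H1 H2].
      pose proof (HK _ H1). pose proof (HK _ Hf). pose proof (Hnn _ H1). pose proof (Hnn _ Hf).
      pose proof (Cmod_ge_0 (phi (dil (rk k) f))). pose proof (Cmod_ge_0 (phi f)).
      destruct (Rle_or_lt 0 K).
      + nra.
      + assert (E1 : nX f = 0) by nra. assert (E2 : nX (dil (rk k) f) = 0) by nra.
        rewrite E1, Rmult_0_r, Rmult_0_l. rewrite E2, Rmult_0_r in H. exact H. }
  destruct (HR Phi HPhi) as [g [Hg HgPhi]].
  assert (Hgf : eqD g f).
  { intros z Hz. destruct (pt_eval_bound X nX HI z Hz) as [K HK].
    assert (Hd : in_dual X nX (fun h => h z)).
    { split. intros; reflexivity. exists K. exact HK. }
    rewrite <- (HgPhi _ Hd). unfold Phi. apply ULim_eq; auto.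
    apply ulim_conv; auto. apply dil_conv; auto. }
  assert (E1 : psi g = psi f) by (apply (dual_eqD X nX psi HB Hpsi); auto).
  assert (E2 : Phi psi = RtoC 0).
  { unfold Phi. apply ULim_eq; auto. apply ulim_conv; auto. intros e He'.
    exists 0%nat. intros k _.
    assert (psi (dil (rk k) f) = RtoC 0).
    { unfold psi. apply ULim_eq; auto. apply ulim_conv; auto. intros e2 He2.
      destruct (HZ (rk k) (rk_bounds k) e2 He2) as [N HN]. exists N. intros n Hn.
      replace (Cminus (phis n (dil (rk k) f)) (RtoC 0)) with (phis n (dil (rk k) f)) by ring. auto. }
    rewrite H. replace (Cminus (RtoC 0) (RtoC 0)) with (RtoC 0) by ring. rewrite Cmod_0. auto. }
  rewrite (HgPhi psi Hpsi) in E2. rewrite E1 in E2. rewrite E2, Cmod_0 in Hpf. lra.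
Qed.

Lemma bad_seq (q : C -> R) :
  ~ (forall eps, 0 < eps -> exists delta, 0 < delta /\
       forall z, inD z -> 1 - delta < Cmod z -> q z < eps) ->
  exists eps, 0 < eps /\ exists zs : nat -> C, (forall n, inD (zs n)) /\
    (forall n, 1 - / (INR n + 1) < Cmod (zs n)) /\ (forall n, eps <= q (zs n)).
Proof.
  intro H. apply NNPP; intro H2. apply H. intros eps He. apply NNPP; intro H3.
  apply H2. exists eps. split; auto.
  assert (Hs : forall n : nat, exists z, inD z /\ 1 - / (INR n + 1) < Cmod z /\ eps <= q z).
  { intro n. apply NNPP; intro H4. apply H3. exists (/ (INR n + 1)). split.
    apply Rinv_0_lt_compat. pose proof (pos_INR n). lra.
    intros z Hz Hz'. apply Rnot_le_lt. intro H5. apply H4. eauto. }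
  exists (fun n => proj1_sig (constructive_indefinite_description _ (Hs n))).
  split; [|split]; intro n; destruct (constructive_indefinite_description _ (Hs n)) as [z Hz]; simpl; tauto.
Qed.

Lemma seq_near (zs : nat -> C) : (forall n, 1 - / (INR n + 1) < Cmod (zs n)) ->
  forall delta, 0 < delta -> exists N, forall n, (N <= n)%nat -> 1 - delta < Cmod (zs n).
Proof.
  intros H delta Hd. destruct (archimed_cor1 delta Hd) as [N [HN HN0]].
  exists N. intros n Hn. specialize (H n).
  assert (0 < INR N) by (apply lt_0_INR; lia).
  assert (INR N <= INR n) by (apply le_INR; lia).
  assert (/ (INR n + 1) <= / INR N) by (apply Rinv_le_contravar; lra). lra.
Qed.

Theorem corollary3p2 :
  forall (v : C -> R) (X : (C -> C) -> Prop) (nX : (C -> C) -> R)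
         (T : (C -> C) -> (C -> C)),
  typical_weight v ->
  initial_space X nX ->
  reflexive X nX ->
  (exists Cst : R, forall f, X f -> forall r, 0 <= r < 1 ->
      X (dil r f) /\ nX (dil r f) <= Cst * nX f) ->
  intrinsic T ->
  ((forall f, X f -> forall r, 0 <= r < 1 -> Hv0 v (T (dil r f))) ->
     ((forall f, X f -> Hv v (T f)) /\ bounded_into_Hnorm X nX v T
      <-> (forall f, X f -> Hv0 v (T f)) /\ bounded_into_Hnorm X nX v T))
  /\
  ((forall f, X f -> forall r, 0 <= r < 1 -> Bv0 v (T (dil r f))) ->
     ((forall f, X f -> Bv v (T f)) /\ bounded_into_Bnorm X nX v T
      <-> (forall f, X f -> Bv0 v (T f)) /\ bounded_into_Bnorm X nX v T)).
Proof.
  intros v X nX T Hv HI HR [Cst HC] HT.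
  pose proof HI as [HB _].
  pose proof HB as (HXh&_).
  destruct HT as [[HTh [HTe HTl]] _].
  destruct Hv as (_&Hvp&_).
  split.
  - intro HZa. split.
    + intros [HHv [M HM]]. split; [|exists M; auto]. intros f Hf.
      split; [apply HTh; auto|].
      apply NNPP; intro Hn.
      destruct (bad_seq (fun z => v z * Cmod (T f z)) Hn) as [eps [He [zs [HzD [Hzn Hze]]]]].
      apply (core X nX HI HR Cst HC (fun n h => Cmult (RtoC (v (zs n))) (T h (zs n))) M)
        with (f := f) (eps := eps); auto.
      * intros n a b g h Hg Hh. rewrite (HTl a b g h (HXh g Hg) (HXh h Hh) (zs n) (HzD n)).
        unfold fadd, fscale. ring.
      * intros n h Hh. rewrite Cmod_mult, Cmod_R, Rabs_pos_eq. apply HM; auto.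
        destruct (Hvp _ (HzD n)); lra.
      * intros r Hr e He'. destruct (HZa f Hf r Hr) as [_ H0].
        destruct (H0 e He') as [del [Hdel Hd]].
        destruct (seq_near zs Hzn del Hdel) as [N HN]. exists N. intros n Hn'.
        rewrite Cmod_mult, Cmod_R, Rabs_pos_eq. apply Hd; auto.
        destruct (Hvp _ (HzD n)); lra.
      * intro n. rewrite Cmod_mult, Cmod_R, Rabs_pos_eq. auto.
        destruct (Hvp _ (HzD n)); lra.
    + intros [HH0 [M HM]]. split; [|exists M; auto]. intros f Hf. split.
      apply (HH0 f Hf). exists (M * nX f). intros z Hz. apply HM; auto.
  - intro HZb. split.
    + intros [HHv [M HM]]. split; [|exists M; auto]. intros f Hf.
      split; [apply HTh; auto|].
      apply NNPP; intro Hn.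
      destruct (bad_seq (fun z => v z * Cmod (C_derive (T f) z)) Hn) as [eps [He [zs [HzD [Hzn Hze]]]]].
      apply (core X nX HI HR Cst HC (fun n h => Cmult (RtoC (v (zs n))) (C_derive (T h) (zs n))) M)
        with (f := f) (eps := eps); auto.
      * intros n a b g h Hg Hh.
        rewrite (deriv_comb (T g) (T h) _ (zs n) a b (HTh _ (HXh g Hg)) (HTh _ (HXh h Hh)) (HzD n)).
        ring. intros z Hz. apply HTl; auto.
      * intros n h Hh. rewrite Cmod_mult, Cmod_R, Rabs_pos_eq.
        pose proof (HM h Hh (zs n) (HzD n)). pose proof (Cmod_ge_0 (T h (RtoC 0))). lra.
        destruct (Hvp _ (HzD n)); lra.
      * intros r Hr e He'. destruct (HZb f Hf r Hr) as [_ H0].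
        destruct (H0 e He') as [del [Hdel Hd]].
        destruct (seq_near zs Hzn del Hdel) as [N HN]. exists N. intros n Hn'.
        rewrite Cmod_mult, Cmod_R, Rabs_pos_eq. apply Hd; auto.
        destruct (Hvp _ (HzD n)); lra.
      * intro n. rewrite Cmod_mult, Cmod_R, Rabs_pos_eq. auto.
        destruct (Hvp _ (HzD n)); lra.
    + intros [HH0 [M HM]]. split; [|exists M; auto]. intros f Hf. split.
      apply (HH0 f Hf). exists (M * nX f). intros z Hz.
      pose proof (HM f Hf z Hz). pose proof (Cmod_ge_0 (T f (RtoC 0))). lra.
Qed.
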